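(* Let $r, s, m, n$ be positive integers such that $\frac{r+s}{\gcd(r,s)}$ divides $m$. If $f: V(H_{n,m}) \rightarrow \{-r,s\}$ is a function with $f(V(H_{n,m})) = 0$, then $H_{n,m}$ can be decomposed into $n$ vertex-disjoint directed $m$-paths $P_1, \ldots, P_n$ with $f(V(P_i))=0$ for all $1\le i\le n$.
   Context: For a set $Y$ of vertices, $f(Y)=\sum_{y\in Y}f(y)$. $H_{n,m}$ is the directed graph whose vertex set is the disjoint union of $V_1,\dots,V_m$ with $|V_i|=n$, and whose arc set is $\bigcup_{i=1}^{m-1}\{(v,w): v\in V_i, w\in V_{i+1}\}$. A directed $m$-path is a directed path with $m$ vertices. *)

(* Defs.v *)
From mathcomp Require Import all_boot all_order all_algebra.
Set Implicit Arguments. Unset Strict Implicit. Unset Printing Implicit Defensive.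

(* Vertices of H_{n,m}: pairs (layer, index) with layer in 'I_m (V_1..V_m as
   layers 0..m-1) and index in 'I_n (|V_i| = n). *)
Definition Hvert (n m : nat) : finType := ('I_m * 'I_n)%type.

Definition Harc (n m : nat) : rel (Hvert n m) :=
  fun v w => (nat_of_ord v.1).+1 == nat_of_ord w.1.

Definition dipath (T : eqType) (e : rel T) (p : seq T) : bool :=
  match p with
  | [::] => false
  | x :: q => path e x q && uniq p
  end.

Definition dipath_k (T : eqType) (e : rel T) (k : nat) (p : seq T) : bool :=
  dipath e p && (size p == k).

(* Main.v *)
Require Import Defs.
From mathcomp Require Import all_boot all_order all_algebra zify ring.
Import GRing.Theory Num.Theory.
Set Implicit Arguments. Unset Strict Implicit. Unset Printing Implicit Defensive.

Lemma mod2 n x : x < n.*2 -> x %% n = if x < n then x else x - n.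
Proof.
move=> hx; case: ifP => h; first by rewrite modn_small.
have -> : x = (x - n) + n by lia.
rewrite modnDr modn_small; lia.
Qed.

Lemma div2 n x : 0 < n -> x < n.*2 -> x %/ n = (n <= x).
Proof.
move=> hn hx; case: leqP => h; last by rewrite divn_small.
have -> : x = 1 * n + (x - n) by lia.
rewrite divnMDl // divn_small; lia.
Qed.

Lemma rr_step n C p i : 0 < n -> i < n -> p <= n ->
  ((i + (n - C %% n)) %% n < p) + (C %/ n + (i < C %% n))
  = (C + p) %/ n + (i < (C + p) %% n).
Proof.
move=> hn hi hp.
have hc : C %% n < n by rewrite ltn_mod.
move: (divn_eq C n) hc; set q := C %/ n; set c := C %% n => eC hc; rewrite eC.
clearbody q c.
rewrite -(addnA (q * n)) divnMDl // modnMDl.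
rewrite (mod2 (x := i + (n - c))); last lia.
rewrite (mod2 (x := c + p)); last lia.
rewrite div2 //; last lia.
case: (ltnP i c) => h1; case: (ltnP (i + (n - c)) n) => h2;
case: (ltnP (c + p) n) => h3; case: leqP => h4; try lia;
 repeat (case: ltnP => ?); lia.
Qed.

Lemma rr n (p : nat -> nat) i k : 0 < n -> i < n -> (forall l, p l <= n) ->
  \sum_(l < k) ((i + (n - (\sum_(j < l) p j) %% n)) %% n < p l)
  = (\sum_(j < k) p j) %/ n + (i < (\sum_(j < k) p j) %% n).
Proof.
move=> hn hi hp; elim: k => [|k IH].
  by rewrite !big_ord0 div0n mod0n.
rewrite !big_ord_recr /= [X in X = _]addnC IH rr_step //.
Qed.

Lemma count_sum (T : eqType) (a : pred T) (s : seq T) :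
  count a s = \sum_(x <- s) (a x : nat).
Proof. by elim: s => [|x s IH]; rewrite ?big_nil ?big_cons //= IH. Qed.

Lemma iota_path k l : path (fun a b => a.+1 == b) k (iota k.+1 l).
Proof. by elim: l k => [|l IH] k //=; rewrite eqxx IH. Qed.

Lemma enum_path m (x : 'I_m) q : enum 'I_m = x :: q ->
  path (fun a b : 'I_m => (val a).+1 == val b) x q.
Proof.
move=> E.
have : map val (enum 'I_m) = iota 0 m by rewrite val_enum_ord.
rewrite E; clear E; case: m x q => [|m] x q; first by case: x.
move=> /= [hx hq].
have -> : path (fun a b : 'I_m.+1 => (val a).+1 == val b) x q =
  path (fun a b => a.+1 == b) (nat_of_ord x) (map (@nat_of_ord _) q) by rewrite path_map.
by rewrite hx hq iota_path.
Qed.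

Lemma modfix a c n : a < n -> c < n -> ((a + c) %% n + (n - c)) %% n = a.
Proof.
move=> ha hc; rewrite modnDml -addnA subnKC; last exact: ltnW.
by rewrite modnDr modn_small.
Qed.

Lemma sum_split (I : finType) (b : I -> bool) (r s : nat) :
  (\sum_(x : I) ((b x)%:R * (r + s)%:R - r%:R) : int)%R
  = (((\sum_(x : I) (b x : nat)) * (r + s))%:R - (#|I| * r)%:R)%R.
Proof.
rewrite sumrB sumr_const -mulr_suml -natr_sum -natrM -[(r%:R *+ _)%R]mulr_natr -natrM.
by rewrite [(r * _)%N]mulnC.
Qed.

Lemma sum_enum_map (T : Type) (I : finType) (h : I -> T) (F : T -> int) :
  (\sum_(v <- [seq h l | l <- enum I]) F v = \sum_(l : I) F (h l))%R.
Proof. by rewrite big_map big_enum. Qed.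

Local Open Scope ring_scope.

Theorem corollary4p4 (r s m n : nat)
  (hr : (0 < r)%N) (hs : (0 < s)%N) (hm : (0 < m)%N) (hn : (0 < n)%N)
  (hdiv : ((r + s) %/ gcdn r s %| m)%N)
  (f : Hvert n m -> int)
  (hf : forall v, f v = - (r%:Z) \/ f v = s%:Z)
  (hsum : \sum_(v : Hvert n m) f v = 0) :
  exists P : 'I_n -> seq (Hvert n m),
    (forall i, dipath_k (@Harc n m) m (P i)) /\
    (forall i j, i != j -> forall v, v \in P i -> v \notin P j) /\
    (forall v : Hvert n m, exists i, v \in P i) /\
    (forall i, \sum_(v <- P i) f v = 0).
Proof.
pose pos (v : Hvert n m) := f v == s%:Z.
have fE : forall v, f v = (pos v)%:R * (r + s)%:R - r%:R.
  move=> v; rewrite /pos; case: (hf v) => ->.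
    have -> : (- r%:Z == s%:Z) = false by apply/negbTE/eqP; lia.
    rewrite /= mul0r sub0r; lia.
  by rewrite eqxx /= mul1r; lia.
pose L (l : 'I_m) := [seq j <- enum 'I_n | pos (l, j)] ++
                     [seq j <- enum 'I_n | predC (fun j => pos (l, j)) j].
pose p (l : 'I_m) := size [seq j <- enum 'I_n | pos (l, j)].
have hLp : forall l, perm_eq (L l) (enum 'I_n) by move=> l; rewrite /L perm_filterC.
have hLs : forall l, size (L l) = n.
  by move=> l; rewrite (perm_size (hLp l)) size_enum_ord.
have hLu : forall l, uniq (L l) by move=> l; rewrite (perm_uniq (hLp l)) enum_uniq.
have hpn : forall l, (p l <= n)%N.
  by move=> l; rewrite /p size_filter -[X in (_ <= X)%N]size_enum_ord count_size.
pose pN (k : nat) := if @insub _ (fun x => x < m)%N 'I_m k is Some l then p l else 0%N.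
have pNE : forall l : 'I_m, pN l = p l by move=> l; rewrite /pN valK.
have pNn : forall k, (pN k <= n)%N by move=> k; rewrite /pN; case: insub.
pose C (k : nat) := (\sum_(j < k) pN j)%N.
pose idx (i : 'I_n) (l : 'I_m) := ((i + (n - C l %% n)) %% n)%N.
pose g (i : 'I_n) (l : 'I_m) : Hvert n m := (l, nth i (L l) (idx i l)).
exists (fun i => [seq g i l | l <- enum 'I_m]).
split.
  move=> i; rewrite /dipath_k size_map size_enum_ord eqxx andbT.
  case E: (enum 'I_m) => [|x q].
    by move: (size_enum_ord m); rewrite E /=; lia.
  have gi : injective (g i) by move=> a b [].
  rewrite /= path_map mem_map // map_inj_uniq //.
  have := enum_uniq 'I_m; rewrite E /= => /andP[-> ->]; rewrite !andbT.
  by apply: (sub_path _ (enum_path E)) => a b.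
split.
  move=> i j ij v /mapP[l1 _ ->]; apply/negP => /mapP[l2 _ [e1]]; subst l2.
  rewrite [nth j _ _](set_nth_default i); last by rewrite hLs ltn_mod.
  move/eqP; rewrite nth_uniq ?hLs ?ltn_mod // /idx eqn_modDr !modn_small //.
  by move=> h; move: ij; rewrite -(inj_eq val_inj) h.
split.
  move=> [l x].
  have xin : x \in L l by rewrite (perm_mem (hLp l)) mem_enum.
  have hq : (index x (L l) < n)%N by rewrite -[X in (_ < X)%N](hLs l) index_mem.
  have hc : (C l %% n < n)%N by rewrite ltn_mod.
  exists (Ordinal (ltn_pmod (index x (L l) + C l %% n) hn)).
  apply/mapP; exists l; first by rewrite mem_enum.
  rewrite /g.
  have -> : idx (Ordinal (ltn_pmod (index x (L l) + C l %% n) hn)) l = index x (L l).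
    rewrite /idx; change (((index x (L l) + C l %% n) %% n + (n - C l %% n)) %% n = index x (L l))%N.
    exact: modfix.
  by rewrite nth_index.
have posE : forall (l : 'I_m) (i : 'I_n) q, (q < n)%N ->
    pos (l, nth i (L l) q) = (q < p l)%N.
  move=> l i q hq; rewrite /L nth_cat.
  change (size [seq j <- enum 'I_n | pos (l, j)]) with (p l).
  case: ifP => h.
    by have := mem_nth i h; rewrite mem_filter => /andP[-> _].
  have h2 : (q - p l < size [seq j <- enum 'I_n | predC (fun j => pos (l,j)) j])%N.
    move: (hLs l); rewrite /L size_cat.
    change (size [seq j <- enum 'I_n | pos (l, j)]) with (p l).
    move: h; lia.
  by have := mem_nth i h2; rewrite mem_filter => /andP[/negbTE -> _].
have hT : ((\sum_(j < m) pN j) * (r + s) = m * n * r)%N.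
  have e1 : \sum_v f v = \sum_(v : Hvert n m) ((pos v)%:R * (r+s)%:R - r%:R).
    by apply: eq_bigr => v _; exact: fE.
  rewrite e1 sum_split card_prod !card_ord in hsum.
  have e2 : (\sum_(v : Hvert n m) (pos v : nat) = \sum_(j < m) pN j)%N.
    have -> : (\sum_(j < m) pN j = \sum_(l < m) \sum_(j < n) (pos (l, j) : nat))%N.
      apply: eq_bigr => l _; rewrite pNE /p size_filter count_sum big_enum //.
    rewrite pair_bigA /=; apply: eq_bigr => -[l j] _ //.
  by move: hsum; rewrite e2 => /eqP; rewrite subr_eq0 eqr_nat => /eqP.
have [k hk] := dvdnP hdiv.
have hG : (0 < gcdn r s)%N by rewrite gcdn_gt0 hr.
have hrs : ((r + s) %/ gcdn r s * gcdn r s = r + s)%N.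
  by rewrite divnK // dvdn_add ?dvdn_gcdl ?dvdn_gcdr.
have hrr : (r %/ gcdn r s * gcdn r s = r)%N by rewrite divnK // dvdn_gcdl.
set G := gcdn r s in hk hG hrs hrr.
set S' := ((r + s) %/ G)%N in hk hrs.
set R' := (r %/ G)%N in hrr.
clearbody S' R'; clearbody G.
have hSG : (0 < S' * G)%N by rewrite hrs; lia.
have hTe : (\sum_(j < m) pN j = k * R' * n)%N.
  apply/eqP; rewrite -(eqn_pmul2r hSG); apply/eqP.
  move: hT; rewrite -hrs hk -[in RHS]hrr => ->; ring.
move=> i; rewrite sum_enum_map.
have e3 : \sum_(l : 'I_m) f (g i l) =
          \sum_(l : 'I_m) ((idx i l < p l : bool)%:R * (r+s)%:R - r%:R).
  by apply: eq_bigr => l _; rewrite fE /g posE // /idx ltn_mod.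
rewrite e3 sum_split card_ord.
have hB : (\sum_(l : 'I_m) (idx i l < p l : nat) = k * R')%N.
  rewrite (eq_bigr (fun l : 'I_m => ((i + (n - (\sum_(j < l) pN j) %% n)) %% n < pN l) : nat)); last first.
    by move=> l _; rewrite pNE.
  rewrite rr // ?hTe ?mulnK // modnMl addn0 //.
apply/eqP; rewrite subr_eq0 eqr_nat hB; apply/eqP.
by rewrite -hrs hk -[in RHS]hrr; ring.
Qed.
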